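(* Let $K$ be a field, $Q$ the bipartite type $A$ quiver with vertices $y_0,x_1,\dots,x_n,y_n$ and arrows $\alpha_i\colon x_i\to y_{i-1}$, $\beta_i\colon x_i\to y_i$, $\mathbf{d}$ a dimension vector and $\mathbf{r}$ a quiver rank array with Zelevinsky permutation $v(\mathbf{r})$ and block rank matrix $\mathbf{b}=\mathbf{b}(\mathbf{r})$. Then: (1) $v(\mathbf{r})$ is the minimal length element of its $(W_P,W_P)$-double coset; (2) every box of Fulton's essential set $\mathcal{E}ss(v(\mathbf{r}))$ lies in the southeast corner of a block; (3) the length of $v(\mathbf{r})$ is $$\sum_{i=2}^{2n+1}\sum_{j=1}^{2n}\big(\mathbf{b}_{i-1,2n+1}-\mathbf{b}_{i-1,j}\big)\big(\mathbf{b}_{i,j}+\mathbf{b}_{i-1,j-1}-\mathbf{b}_{i,j-1}-\mathbf{b}_{i-1,j}\big).$$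
   Context: Setup: $\mathrm{rep}_Q(\mathbf{d})$ is the space of tuples $V=(V_a)$, $V_a\in\mathrm{Mat}_{\mathbf{d}(ha)\times\mathbf{d}(ta)}(K)$. $M_Q(V)$: block matrix with block rows $y_0,\dots,y_n$ and block columns $x_n,\dots,x_1$, $V_{\alpha_i}$ in block $(y_{i-1},x_i)$, $V_{\beta_i}$ in block $(y_i,x_i)$, zeros elsewhere; for an interval $J$ (nonempty set of consecutive vertices), $M_J(V)$ is the submatrix on block rows of the $y$-vertices and block columns of the $x$-vertices of $J$. A quiver rank array $\mathbf{r}$ is $J\mapsto\operatorname{rank}M_J(V)$ for some $V$; $\mathcal{O}_\mathbf{r}$ is the set of such $V$. $d_x=\sum\mathbf{d}(x_i)$, $d_y=\sum\mathbf{d}(y_i)$, $d=d_x+d_y$, $\zeta(V)=\begin{pmatrix}M_Q(V)&\mathbf{1}_{d_y}\\ \mathbf{1}_{d_x}&0\end{pmatrix}$. $d\times d$ matrices have row blocks of sizes $\mathbf{d}(y_0),\dots,\mathbf{d}(y_n),\mathbf{d}(x_n),\dots,\mathbf{d}(x_1)$ and column blocks of sizes $\mathbf{d}(x_n),\dots,\mathbf{d}(x_1),\mathbf{d}(y_0),\dots,\mathbf{d}(y_n)$, numbered $1..2n+1$; $Z_{i\times j}$ = block rows $1..i$, block columns $1..j$; $\mathbf{b}_{i,j}=\operatorname{rank}\zeta(V)_{i\times j}$ for $V\in\mathcal{O}_\mathbf{r}$, and $\mathbf{b}_{i,j}=0$ if $i$ or $j\notin[1,2n+1]$. $v(\mathbf{r})$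 is the unique $d\times d$ permutation matrix with exactly $\mathbf{b}_{i,j}+\mathbf{b}_{i-1,j-1}-\mathbf{b}_{i,j-1}-\mathbf{b}_{i-1,j}$ ones in block $(i,j)$ and whose ones run from northwest to southeast within each block row and each block column. A permutation $u\in S_d$ corresponds to the matrix with $1$ at $(i,u(i))$; its length is the number of inversions, equivalently the number of pairs of $1$s one of which lies strictly northeast of the other. The diagram of $u$ is the set of positions of the $d\times d$ grid with no $1$ directly north (same column, above) and no $1$ directly west (same row, left); $\mathcal{E}ss(u)$ is the set of positions $(i,j)$ in the diagram such that neither $(i+1,j)$ nor $(i,j+1)$ is in the diagram. The $(W_P,W_P)$-double coset of a permutation matrix $u$ is the set of permutation matrices obtained from $u$ by permuting rows within each block row and columns within each block column. *)

(* Defs.v *)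
From mathcomp Require Import all_boot all_order all_algebra all_fingroup.
Import GRing.Theory.

Definition cum (s : seq nat) (k : nat) : nat := sumn (take k s).
(* blk s a = (0-indexed) number of the block containing index a *)
Definition blk (s : seq nat) (a : nat) : nat :=
  count (fun k => cum s k.+1 <= a) (iota 0 (size s)).
Definition off (s : seq nat) (a : nat) : nat := a - cum s (blk s a).

(* dimension vector: dy i for y_i (0 <= i <= n), dx i for x_i (1 <= i <= n) *)
Definition YS (n : nat) (dy : nat -> nat) : seq nat := map dy (iota 0 n.+1).
Definition XS (n : nat) (dx : nat -> nat) : seq nat := rev (map dx (iota 1 n)).
(* row blocks of d x d matrices: y_0..y_n, x_n..x_1 *)
Definition RS n dx dy : seq nat := YS n dy ++ XS n dx.
(* column blocks of d x d matrices: x_n..x_1, y_0..y_n *)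
Definition CS n dx dy : seq nat := XS n dx ++ YS n dy.
Definition dimX n dx : nat := sumn (XS n dx).
Definition dimY n dy : nat := sumn (YS n dy).
Definition dimT n dx dy : nat := dimX n dx + dimY n dy.

(* entry of a matrix at nat indices (0 outside) *)
Definition mget {K : nzRingType} {r c : nat} (A : 'M[K]_(r, c)) (p q : nat) : K :=
  match (insub p : option 'I_r), (insub q : option 'I_c) with
  | Some i, Some j => A i j
  | _, _ => 0%R
  end.

(* M_Q(V): block rows y_0..y_n, block columns x_n..x_1;
   V_{alpha_m} (alpha m : dy(m-1) x dx(m)) in block (y_{m-1}, x_m),
   V_{beta_m}  (beta m  : dy(m)   x dx(m)) in block (y_m, x_m). *)
Definition MQ {K : nzRingType} (n : nat) (dx dy : nat -> nat)
  (alpha : forall m, 'M[K]_(dy m.-1, dx m)) (beta : forall m, 'M[K]_(dy m, dx m))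
  (a c : nat) : K :=
  let k := blk (YS n dy) a in
  let p := off (YS n dy) a in
  let m := n - blk (XS n dx) c in
  let q := off (XS n dx) c in
  if k.+1 == m then mget (alpha m) p q
  else if k == m then mget (beta m) p q
  else 0%R.

(* zeta(V) = [[M_Q(V), 1_{d_y}], [1_{d_x}, 0]] as a function of nat indices *)
Definition zeta_fun {K : nzRingType} (n : nat) (dx dy : nat -> nat)
  (alpha : forall m, 'M[K]_(dy m.-1, dx m)) (beta : forall m, 'M[K]_(dy m, dx m))
  (a c : nat) : K :=
  if a < dimY n dy then
    (if c < dimX n dx then MQ n dx dy alpha beta a c else (((a == c - dimX n dx)%N)%:R)%R)
  else
    (if c < dimX n dx then (((a - dimY n dy == c)%N)%:R)%R else 0%R).

Definition zeta {K : nzRingType} (n : nat) (dx dy : nat -> nat)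
  (alpha : forall m, 'M[K]_(dy m.-1, dx m)) (beta : forall m, 'M[K]_(dy m, dx m))
  : 'M[K]_(dimT n dx dy) :=
  (\matrix_(a, c) zeta_fun n dx dy alpha beta a c)%R.

(* block rank matrix b_{i,j} (1-indexed blocks), 0 outside [1, 2n+1] *)
Definition brank {K : fieldType} (n : nat) (dx dy : nat -> nat)
  (alpha : forall m, 'M[K]_(dy m.-1, dx m)) (beta : forall m, 'M[K]_(dy m, dx m))
  (i j : nat) : nat :=
  if (0 < i <= n.*2.+1) && (0 < j <= n.*2.+1) then
    \rank (\matrix_(a < cum (RS n dx dy) i, c < cum (CS n dx dy) j)
              zeta_fun n dx dy alpha beta a c)%R
  else 0.

(* ---------- permutations; u has its 1 at (i, u i) ---------- *)
(* u is the Zelevinsky permutation for b: block (I+1,J+1) (1-indexed) contains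
   b_{I+1,J+1} + b_{I,J} - b_{I+1,J} - b_{I,J+1} ones, and the ones run NW to SE
   within each block row and each block column. N = number of blocks. *)
Definition zel_perm (N : nat) (R C : seq nat) (b : nat -> nat -> nat) {d : nat}
  (u : 'S_d) : Prop :=
  (forall I J, I < N -> J < N ->
     ((#|[set i : 'I_d | (blk R i == I) && (blk C (u i) == J)]|)%:Z
       = (b I.+1 J.+1)%:Z + (b I J)%:Z - (b I.+1 J)%:Z - (b I J.+1)%:Z)%R) /\
  (forall i1 i2 : 'I_d, blk R i1 = blk R i2 -> i1 < i2 -> u i1 < u i2) /\
  (forall j1 j2 : 'I_d, blk C j1 = blk C j2 -> j1 < j2 ->
     (u^-1)%g j1 < (u^-1)%g j2).

(* length = number of inversions = pairs of 1s, one strictly NE of the other *)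
Definition perm_len {d : nat} (u : 'S_d) : nat :=
  #|[set p : 'I_d * 'I_d | (p.1 < p.2) && (u p.2 < u p.1)]|.

(* w is in the (W_P,W_P)-double coset of u: obtained by permuting rows within
   block rows (p) and columns within block columns (q) *)
Definition in_dcoset (R C : seq nat) {d : nat} (w u : 'S_d) : Prop :=
  exists p q : 'S_d,
    (forall i, blk R (p i) = blk R i) /\ (forall j, blk C (q j) = blk C j) /\
    (forall i, w i = q (u (p i))).

(* Fulton's diagram: (i,j) with no 1 weakly north (in column j, row <= i)
   and no 1 weakly west (in row i, column <= j) *)
Definition in_diagram {d : nat} (u : 'S_d) (i j : nat) : bool :=
  [exists a : 'I_d, exists c : 'I_d,
     [&& val a == i, val c == j, j < u a & i < (u^-1)%g c]].

Definition in_ess {d : nat} (u : 'S_d) (i j : nat) : bool :=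
  [&& in_diagram u i j, ~~ in_diagram u i.+1 j & ~~ in_diagram u i j.+1].

Definition se_corner (R C : seq nat) (i j : nat) : bool :=
  (i.+1 == cum R (blk R i).+1) && (j.+1 == cum C (blk C j).+1).

(* Main.v *)
Require Import Defs.
From mathcomp Require Import all_boot all_order all_algebra all_fingroup zify ring lra.
Import GRing.Theory.
Set Implicit Arguments. Unset Strict Implicit.
Lemma cum_mono s k k' : k <= k' -> cum s k <= cum s k'.
Proof.
move=> le; rewrite /cum -(subnKC le) takeD sumn_cat; exact: leq_addr.
Qed.

Lemma cum_le_sumn s k : cum s k <= sumn s.
Proof. by rewrite /cum -{2}(cat_take_drop k s) sumn_cat leq_addr. Qed.

Lemma cum_size s : cum s (size s) = sumn s.
Proof. by rewrite /cum take_size. Qed.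

Lemma count_down (P : pred nat) : (forall k, P k.+1 -> P k) ->
  forall m k, k < m -> (k < count P (iota 0 m)) = P k.
Proof.
move=> Pd; have Pdn : forall j k, P (k + j) -> P k.
  by elim=> [|j IH] k; rewrite ?addn0 // addnS => /Pd /IH.
elim=> [|m IH] k //; rewrite ltnS -[m.+1]addn1 iotaD count_cat /= add0n addn0.
case Pm: (P m).
  have ->: count P (iota 0 m) = m.
    apply/eqP; rewrite -[X in _ == X](size_iota 0 m) -all_count.
    apply/allP=> x; rewrite mem_iota add0n => /andP [_ xm].
    by apply: (Pdn (m - x)); rewrite subnKC // ltnW.
  rewrite addn1 ltnS => km; rewrite km; symmetry; apply: (Pdn (m - k)); by rewrite subnKC.
rewrite addn0 leq_eqVlt => /orP [/eqP -> | km]; last exact: IH.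
rewrite Pm; apply/negbTE; rewrite -leqNgt.
by rewrite -[X in _ <= X](size_iota 0 m) count_size.
Qed.

Lemma blkP s a k : k < size s -> (k < blk s a) = (cum s k.+1 <= a).
Proof.
move=> ks; rewrite /blk (@count_down (fun k => cum s k.+1 <= a)) //.
by move=> j /= H; apply: leq_trans H; apply: cum_mono.
Qed.

Lemma blk_mono s a a' : a <= a' -> blk s a <= blk s a'.
Proof.
move=> le; rewrite /blk; apply: sub_count => k /= H; exact: leq_trans H le.
Qed.

Lemma blk_lt s a : a < sumn s -> blk s a < size s.
Proof.
move=> as0; case: (ltnP (blk s a) (size s)) => // H.
have sz : 0 < size s by case: s as0 {H} => //.
have szp : (size s).-1 < size s by rewrite ltn_predL.
have := @blkP s a (size s).-1 szp.
rewrite (leq_trans _ H) ?leq_pred // prednK // cum_size => /esym.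
by rewrite leqNgt as0.
Qed.

Lemma blk_se s a : a < sumn s -> (a.+1 < sumn s -> blk s a <> blk s a.+1) ->
  a.+1 = cum s (blk s a).+1.
Proof.
move=> as0 H; have bl := @blk_lt s a as0.
have h1 : a < cum s (blk s a).+1 by rewrite ltnNge -blkP // ltnn.
apply/eqP; rewrite eqn_leq h1 /=.
case: (ltnP a.+1 (sumn s)) => [aS | aS]; last first.
  exact: leq_trans (cum_le_sumn _ _) aS.
rewrite -blkP //; have := @blk_mono s _ _ (leqnSn a); rewrite leq_eqVlt => /orP [/eqP e|//].
by case: (H aS).
Qed.

Definition nwse d (r c : nat -> nat) (u : 'S_d) : Prop :=
  (forall i1 i2 : 'I_d, r i1 = r i2 -> i1 < i2 -> u i1 < u i2) /\
  (forall j1 j2 : 'I_d, c j1 = c j2 -> j1 < j2 -> (u^-1)%g j1 < (u^-1)%g j2).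
Definition mono (f : nat -> nat) := forall a a', a <= a' -> f a <= f a'.
Definition cross d (r c : nat -> nat) (v : 'S_d) : {set 'I_d * 'I_d} :=
  [set x : 'I_d * 'I_d | (r x.1 < r x.2) && (c (v x.2) < c (v x.1))].
Definition invs d (v : 'S_d) : {set 'I_d * 'I_d} :=
  [set x : 'I_d * 'I_d | (x.1 < x.2) && (v x.2 < v x.1)].
Definition cnt d (r c : nat -> nat) (v : 'S_d) I J :=
  #|[set i : 'I_d | (r i == I) && (c (v i) == J)]|.

Lemma mono_lt f a a' : mono f -> f a < f a' -> a < a'.
Proof. by move=> m; apply: contraTT; rewrite -!leqNgt => /m. Qed.

Lemma cross_sub d r c (v : 'S_d) : mono r -> mono c -> cross r c v \subset invs v.
Proof.
move=> mr mc; apply/subsetP=> [[x1 x2]]; rewrite !inE /= => /andP [h1 h2].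
by rewrite (mono_lt mr h1) (mono_lt mc h2).
Qed.

Lemma cross_eq d r c (u : 'S_d) : mono r -> mono c -> nwse r c u ->
  invs u = cross r c u.
Proof.
move=> mr mc [H1 H2]; apply/eqP; rewrite eqEsubset cross_sub // andbT.
apply/subsetP=> [[x1 x2]]; rewrite !inE /= => /andP [h1 h2].
have l1 : r x1 <= r x2 by apply: mr; apply: ltnW.
have l2 : c (u x2) <= c (u x1) by apply: mc; apply: ltnW.
rewrite ltn_neqAle l1 ltn_neqAle l2 !andbT; apply/andP; split.
  by apply/eqP=> e; have := H1 _ _ e h1; rewrite ltnNge ltnW.
apply/eqP=> e; have := H2 _ _ e h2; rewrite !permK => h.
by have := ltn_trans h h1; rewrite ltnn.
Qed.

Lemma eq_nwse d r c (w : 'S_d) : cross r c w = invs w -> nwse r c w.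
Proof.
move=> E; split.
  move=> i1 i2 e lt; case: (ltngtP (w i1) (w i2)) => // [h|/val_inj/perm_inj h].
    have : (i1, i2) \in invs w by rewrite inE /= lt h.
    by rewrite -E inE /= e ltnn.
  by move: lt; rewrite h ltnn.
move=> j1 j2 e lt; case: (ltngtP ((w^-1)%g j1) ((w^-1)%g j2)) => // [h|/val_inj h].
  have : ((w^-1)%g j2, (w^-1)%g j1) \in invs w by rewrite inE /= h !permKV lt.
  by rewrite -E inE /= !permKV e ltnn andbF.
by move: h => /(congr1 w); rewrite !permKV => h; move: lt; rewrite h ltnn.
Qed.


Lemma uniq_step d r c (u w : 'S_d) : mono c -> nwse r c w ->
  (forall I J, cnt r c u I J = cnt r c w I J) ->
  forall i : 'I_d, (forall i0 : 'I_d, i0 < i -> u i0 = w i0) -> u i < w i -> False.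
Proof.
move=> mc [H1 H2] Hc i Hagr lt.
set j := u i; set i' := (w^-1)%g j.
have ne : i' != i.
  apply/negP=> /eqP e; have wi : w i = u i.
    by rewrite -[in LHS]e /i' permKV.
  by move: lt; rewrite wi ltnn.
have gt : i < i'.
  case: (ltngtP i i') => // [h|/val_inj h]; last by move: ne; rewrite h eqxx.
  have := Hagr _ h; rewrite /i' permKV => /perm_inj h2.
  by move: ne; rewrite /i' h2 eqxx.
have cne : c (w i) != c j.
  apply/eqP=> e; have := H2 j (w i) (esym e) lt; rewrite permK -/i' => h.
  by have := ltn_trans h gt; rewrite ltnn.
have cgt : c j < c (w i) by rewrite ltn_neqAle eq_sym cne mc // ltnW.
have : cnt r c w (r i) (c j) < cnt r c u (r i) (c j).
  apply: (@leq_ltn_trans #|[set i0 : 'I_d | (i0 < i) && ((r i0 == r i) && (c (u i0) == c j))]|).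
    apply: subset_leq_card; apply/subsetP=> i0; rewrite !inE => /andP [/eqP e1 /eqP e2].
    case: (ltngtP i0 i) => [h|h|/val_inj h]; last by move: cne; rewrite -e2 h !eqxx.
    - by rewrite Hagr // e1 e2 !eqxx.
    - have := H1 _ _ (esym e1) h => /ltnW /mc; rewrite e2 => h'.
      by have := leq_trans cgt h'; rewrite ltnn.
  apply: proper_card; rewrite properE; apply/andP; split.
    by apply/subsetP=> i0; rewrite !inE => /andP [].
  apply/subsetPn; exists i; first by rewrite !inE !eqxx.
  by rewrite !inE ltnn.
by rewrite Hc ltnn.
Qed.

Lemma uniq_perm d r c (u w : 'S_d) : mono c -> nwse r c u -> nwse r c w ->
  (forall I J, cnt r c u I J = cnt r c w I J) -> u = w.
Proof.
move=> mc Nu Nw Hc.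
suff H : forall k (i : 'I_d), i < k -> u i = w i.
  by apply/permP => i; apply: (H i.+1).
elim=> [//|k IH] i; rewrite ltnS leq_eqVlt => /orP [/eqP e|]; last exact: IH.
have agr : forall i0 : 'I_d, i0 < i -> u i0 = w i0 by move=> i0; rewrite e; apply: IH.
case: (ltngtP (u i) (w i)) => [h|h|/val_inj //].
  by case: (uniq_step mc Nw Hc agr h).
case: (uniq_step mc Nu (fun I J => esym (Hc I J)) _ h) => i0 /agr ->.
by [].
Qed.

Lemma part1 d r c (u w p q : 'S_d) : mono r -> mono c -> nwse r c u ->
  (forall i, r (p i) = r i) -> (forall j, c (q j) = c j) ->
  (forall i, w i = q (u (p i))) -> w != u -> #|invs u| < #|invs w|.
Proof.
move=> mr mc Nu Hp Hq Hw wu.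
have cw : #|cross r c w| = #|cross r c u|.
  pose f := fun x : 'I_d * 'I_d => (p x.1, p x.2).
  have fi : injective f.
    by move=> [a1 a2] [b1 b2] [/perm_inj -> /perm_inj ->].
  rewrite -[RHS](card_preimset _ fi); apply: eq_card => [[x1 x2]].
  by rewrite !inE /= !Hw !Hq !Hp.
rewrite (cross_eq mr mc Nu) -cw.
case E: (cross r c w == invs w).
  have Nw := eq_nwse (eqP E).
  have Hc : forall I J, cnt r c u I J = cnt r c w I J.
    move=> I J; rewrite /cnt -[LHS](card_preimset _ (@perm_inj _ p)).
    by apply: eq_card => x; rewrite !inE Hw Hq Hp.
  by move: wu; rewrite (uniq_perm mc Nu Nw Hc) eqxx.
apply: proper_card; rewrite properEneq E cross_sub //.
Qed.

Lemma part2 d (R C : seq nat) (u : 'S_d) : sumn R = d -> sumn C = d ->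
  nwse (blk R) (blk C) u -> forall i j, in_ess u i j -> se_corner R C i j.
Proof.
move=> sR sC [H1 H2] i j /and3P [D1 D2 D3].
case/existsP: D1 => a /existsP [c /and4P [/eqP ea /eqP ec h1 h2]].
subst i j; apply/andP; split; apply/eqP; apply: blk_se.
- by rewrite sR ltn_ord.
- rewrite sR => lt e; move/negP: D2; apply; apply/existsP.
  exists (Ordinal lt); apply/existsP; exists c; rewrite /= !eqxx /=.
  have hu : u a < u (Ordinal lt) by apply: H1 => //=.
  rewrite (ltn_trans h1 hu) /=.
  case: (ltngtP a.+1 ((u^-1)%g c)) => // [h|h]; first by move: h; rewrite ltnNge h2.
  have e2 : Ordinal lt = (u^-1)%g c by apply: val_inj.
  by move: hu; rewrite e2 permKV ltnNge ltnW.
- by rewrite sC ltn_ord.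
- rewrite sC => lt e; move/negP: D3; apply; apply/existsP.
  exists a; apply/existsP; exists (Ordinal lt); rewrite /= !eqxx /=.
  have hu : (u^-1)%g c < (u^-1)%g (Ordinal lt) by apply: H2 => //=.
  rewrite (ltn_trans h2 hu) andbT.
  case: (ltngtP c.+1 (u a)) => // [h|h]; first by move: h; rewrite ltnNge h1.
  have e2 : Ordinal lt = u a by apply: val_inj.
  by move: hu; rewrite e2 permK ltnNge ltnW.
Qed.

Lemma ind_mul (a b : bool) : ((a%:R * b%:R : int) = (a && b)%:R)%R.
Proof. by case: a; case: b; rewrite ?mul1r ?mul0r. Qed.

Lemma sum_ind (m n k : nat) :
  (\sum_(m <= i < n) ((i == k)%:R : int))%R = ((m <= k)%N && (k < n)%N)%:R%R.
Proof.
elim: n => [|n IH]; first by rewrite big_geq // ltn0 andbF.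
case: (leqP m n) => mn; last first.
  rewrite big_geq //; case: (leqP m k) => //= mk.
  by rewrite ltnNge (leq_trans mn mk).
rewrite big_nat_recr //= IH ltnS.
by case: (ltngtP k n) => [h|h|->]; rewrite ?andbT ?andbF ?mn ?addr0 ?add0r.
Qed.

Definition Fs d (r c : nat -> nat) (u : 'S_d) i j : int :=
  (\sum_(p : 'I_d) ((r p < i)%N && (c (u p) < j)%N)%:R)%R.

Lemma cntE d r c (u : 'S_d) I J :
  ((cnt r c u I J)%:R = \sum_(p : 'I_d) (((r p == I)%N && (c (u p) == J)%N)%:R : int))%R.
Proof.
rewrite /cnt -sum1_card natr_sum big_mkcond /=; apply: eq_bigr => p _.
by rewrite inE; case: (_ && _).
Qed.

Lemma cntZ d r c (u : 'S_d) I J :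
  ((cnt r c u I J)%:Z = \sum_(p : 'I_d) (((r p == I)%N && (c (u p) == J)%N)%:R : int))%R.
Proof. by rewrite -natz cntE. Qed.

Lemma F_rec d r c (u : 'S_d) i j :
  (Fs r c u i.+1 j.+1 = (cnt r c u i j)%:R + Fs r c u i.+1 j + Fs r c u i j.+1 - Fs r c u i j)%R.
Proof.
rewrite cntE /Fs -!big_split -sumrB /=; apply: eq_bigr => p _.
rewrite !ltnS; case: (ltngtP (r p) i); case: (ltngtP (c (u p)) j) => //= _ _;
  rewrite ?(addr0, add0r, subr0, subrr) //.
Qed.

Lemma bF d N r c (u : 'S_d) (b : nat -> nat -> nat) :
  (forall j, b 0 j = 0) -> (forall i, b i 0 = 0) ->
  (forall I J, I < N -> J < N -> ((cnt r c u I J)%:Z =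
     (b I.+1 J.+1)%:Z + (b I J)%:Z - (b I.+1 J)%:Z - (b I J.+1)%:Z)%R) ->
  forall i j, i <= N -> j <= N -> ((b i j)%:Z = Fs r c u i j)%R.
Proof.
move=> b0 b0' H; elim=> [|i IHi] j iN jN.
  by rewrite b0 /Fs big1.
elim: j jN => [|j IHj] jN.
  by rewrite b0' /Fs big1 // => p _; rewrite andbF.
have Hij := H i j iN jN.
rewrite F_rec -IHi ?(ltnW iN) // -IHi ?(ltnW iN) ?(ltnW jN) // -IHj ?(ltnW jN) //.
rewrite natz; lia.
Qed.

Lemma bool_R (a b : bool) : (a -> b) -> (b -> a) -> (a%:R : int)%R = (b%:R)%R.
Proof. by case: a; case: b => // H1 H2; [have := H1 isT | have := H2 isT]. Qed.

Lemma inner_sum N (r1 r2 c1 c2 : nat) : r2 < N -> c1 < N ->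
  (\sum_(2 <= i < N.+1) \sum_(1 <= j < N)
     ((((r1 < i.-1)%N && (j <= c1)%N)%:R : int) * ((r2 == i.-1)%N && (c2 == j.-1)%N)%:R)
   = ((r1 < r2)%N && (c2 < c1)%N)%:R)%R.
Proof.
move=> r2N c1N.
rewrite (eq_big_nat _ _ (F2 := fun i => (\sum_(1 <= j < N)
   (((i == r2.+1)%N%:R : int) * (((j == c2.+1)%N%:R : int) *
     ((r1 < r2)%N && (c2 < c1)%N)%:R)))%R)); last first.
  move=> i /andP [i2 _]; apply: eq_big_nat => j /andP [j1 _].
  by rewrite !ind_mul; apply: bool_R => H; lia.
under eq_bigr do rewrite -mulr_sumr -mulr_suml sum_ind.
rewrite -mulr_suml sum_ind.
case: (boolP ((r1 < r2) && (c2 < c1))) => [/andP [h1 h2]|_]; last by rewrite !mulr0.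
have -> : ((2 <= r2.+1) && (r2.+1 < N.+1)) = true by lia.
have -> : ((1 <= c2.+1) && (c2.+1 < N)) = true by lia.
by rewrite !mul1r.
Qed.

Lemma part3 d N (r c : nat -> nat) (u : 'S_d) (b : nat -> nat -> nat) :
  (forall p : 'I_d, r p < N) -> (forall p : 'I_d, c p < N) ->
  (forall j, b 0 j = 0) -> (forall i, b i 0 = 0) ->
  (forall I J, I < N -> J < N -> ((cnt r c u I J)%:Z =
     (b I.+1 J.+1)%:Z + (b I J)%:Z - (b I.+1 J)%:Z - (b I J.+1)%:Z)%R) ->
  ((#|cross r c u|)%:Z = \sum_(2 <= i < N.+1) \sum_(1 <= j < N)
          (((b i.-1 N)%:Z - (b i.-1 j)%:Z) *
           ((b i j)%:Z + (b i.-1 j.-1)%:Z - (b i j.-1)%:Z - (b i.-1 j)%:Z)))%R.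
Proof.
move=> rN cN b0 b0' H.
have bF' := bF b0 b0' H.
rewrite (eq_big_nat _ _ (F2 := fun i => \sum_(1 <= j < N)
   \sum_(p1 : 'I_d) \sum_(p2 : 'I_d)
     ((((r p1 < i.-1)%N && (j <= c (u p1))%N)%:R : int) *
       ((r p2 == i.-1)%N && (c (u p2) == j.-1)%N)%:R))%R); last first.
  move=> i /andP [i2 iN]; apply: eq_big_nat => j /andP [j1 jN].
  have := H i.-1 j.-1; rewrite !prednK ?(leq_trans _ i2) // => <-; try lia.
  rewrite cntZ (bF' i.-1 N) ?(bF' i.-1 j) ?leqnn; try lia.
  rewrite /Fs -sumrB big_distrlr /=; apply: eq_bigr => p1 _.
  apply: eq_bigr => p2 _; congr (_ * _)%R.
  rewrite (cN (u p1)) andbT; case: (r p1 < i.-1)%N => /=; last by rewrite subrr.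
  by case: (ltnP (c (u p1)) j) => _; rewrite ?subrr ?subr0.
under eq_bigr => i _ do rewrite exchange_big.
rewrite exchange_big.
under eq_bigr => p1 _ do under eq_bigr => i _ do rewrite exchange_big.
under eq_bigr => p1 _ do rewrite exchange_big.
under eq_bigr => p1 _ do under eq_bigr => p2 _ do
  rewrite (@inner_sum N (r p1) (r p2) (c (u p1)) (c (u p2)) (rN p2) (cN (u p1))).
rewrite pair_bigA /= /cross -natz -sum1_card natr_sum big_mkcond /=.
by apply: eq_bigr => [[p1 p2]] _; rewrite inE /=; case: (_ && _).
Qed.

Unset Implicit Arguments.

Theorem lemma4p10 (K : fieldType) (n : nat) (dx dy : nat -> nat)
  (alpha : forall m, 'M[K]_(dy m.-1, dx m)) (beta : forall m, 'M[K]_(dy m, dx m))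
  (u : 'S_(dimT n dx dy)) :
  let b := brank n dx dy alpha beta in
  zel_perm n.*2.+1 (RS n dx dy) (CS n dx dy) b u ->
  [/\ (forall w : 'S_(dimT n dx dy), in_dcoset (RS n dx dy) (CS n dx dy) w u ->
          w != u -> perm_len u < perm_len w),
      (forall i j : nat, in_ess u i j -> se_corner (RS n dx dy) (CS n dx dy) i j)
    & ((perm_len u)%:Z =
       \sum_(2 <= i < n.*2.+2) \sum_(1 <= j < n.*2.+1)
          (((b i.-1 n.*2.+1)%:Z - (b i.-1 j)%:Z) *
           ((b i j)%:Z + (b i.-1 j.-1)%:Z - (b i j.-1)%:Z - (b i.-1 j)%:Z)))%R].
Proof.
move=> b [Hc [H1 H2]].
have sR : sumn (RS n dx dy) = dimT n dx dy.
  by rewrite /RS /dimT /dimX /dimY sumn_cat addnC.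
have sC : sumn (CS n dx dy) = dimT n dx dy by rewrite /CS sumn_cat.
have zR : size (RS n dx dy) = n.*2.+1.
  by rewrite /RS size_cat /YS /XS size_rev !size_map !size_iota -addnn addSn.
have zC : size (CS n dx dy) = n.*2.+1.
  by rewrite /CS size_cat /YS /XS size_rev !size_map !size_iota -addnn addnS.
have Nu : nwse (blk (RS n dx dy)) (blk (CS n dx dy)) u by split.
have mR : mono (blk (RS n dx dy)) by move=> a a'; apply: blk_mono.
have mC : mono (blk (CS n dx dy)) by move=> a a'; apply: blk_mono.
have rN : forall p : 'I_(dimT n dx dy), blk (RS n dx dy) p < n.*2.+1.
  by move=> p; rewrite -zR blk_lt // sR.
have cN : forall p : 'I_(dimT n dx dy), blk (CS n dx dy) p < n.*2.+1.
  by move=> p; rewrite -zC blk_lt // sC.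
split.
- move=> w [p [q [Hp [Hq Hw]]]] wu.
  exact: (part1 mR mC Nu Hp Hq Hw wu).
- exact: part2 sR sC Nu.
- change (perm_len u) with #|invs u|.
  rewrite (cross_eq mR mC Nu).
  apply: part3 rN cN _ _ Hc.
    by move=> j; rewrite /b /brank.
  by move=> i; rewrite /b /brank /= andbF.
Qed.
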